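(* Let $I\in\mathbb{I}_{m,n}$ and let $J\in\mathrm{Cov}(I)$. Then $\#J_0=\#I_0+1$. Consequently $\mathbb{I}_{m,n}$ is a graded poset with rank function $I\mapsto \#I_0$.
   Context: Fix a field $K$. For integers $m,n\ge1$, $G_{m,n}$ is the equioriented commutative $m\times n$ grid: the quiver with vertex set $\{(i,j):1\le i\le m,\ 1\le j\le n\}$ and arrows $(i,j)\to(i,j+1)$ and $(i,j)\to(i+1,j)$, bound by all commutativity relations. An interval of $G_{m,n}$ is a nonempty full subquiver $I$ which is connected (as an undirected graph) and convex (whenever $x,y\in I_0$ and there are paths $x\to z$ and $z\to y$ in $G_{m,n}$, then $z\in I_0$); $I_0$ denotes its vertex set. $\mathbb{I}_{m,n}$ is the set of intervals, partially ordered by $I\le J\iff I_0\subseteq J_0$. $\mathrm{Cov}(I)$ is the set of $J\in\mathbb{I}_{m,n}$ covering $I$, i.e. $I<J$ and there is no interval strictly between $I$ and $J$. *)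

(* Defs.v *)
From mathcomp Require Import all_boot.
Set Implicit Arguments. Unset Strict Implicit. Unset Printing Implicit Defensive.

(* Vertices of G_{m,n}: (i,j) with 0 <= i < m, 0 <= j < n (0-indexed). *)
Definition vertex (m n : nat) : finType := ('I_m * 'I_n)%type.

Definition arrow (m n : nat) : rel (vertex m n) :=
  fun x y =>
    ((nat_of_ord x.1 == nat_of_ord y.1) && (nat_of_ord y.2 == (nat_of_ord x.2).+1))
    || ((nat_of_ord x.2 == nat_of_ord y.2) && (nat_of_ord y.1 == (nat_of_ord x.1).+1)).

Definition path_to (m n : nat) (x y : vertex m n) : bool := connect (@arrow m n) x y.

Definition adj_in (m n : nat) (A : {set vertex m n}) : rel (vertex m n) :=
  fun x y => [&& x \in A, y \in A & (arrow x y || arrow y x)].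

Definition is_interval (m n : nat) (A : {set vertex m n}) : Prop :=
  [/\ A != set0,
      (forall x y, x \in A -> y \in A -> connect (adj_in A) x y)
    & (forall x y z, x \in A -> y \in A -> path_to x z -> path_to z y -> z \in A)].

Definition covers (m n : nat) (I J : {set vertex m n}) : Prop :=
  [/\ is_interval J, I \proper J
    & ~ (exists K : {set vertex m n}, [/\ is_interval K, I \proper K & K \proper J])].

(* Main.v *)
Require Import Defs.
From mathcomp Require Import all_boot.
From mathcomp Require Import zify.
Set Implicit Arguments. Unset Strict Implicit. Unset Printing Implicit Defensive.

Section Gen.
Variables (T : finType) (e : rel T) (r : T -> nat).
Hypothesis hr : forall x y, e x y -> r x < r y.

Lemma conn_rank x y : connect e x y -> x = y \/ r x < r y.
Proof.
move/connectP=> [p pth ->]; elim: p x pth => [|z p IH] x /=; first by left.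
move=> /andP[exz /IH [<-|lt]]; right; first exact: hr.
exact: ltn_trans (hr exz) lt.
Qed.

Lemma conn_last a x : connect e a x -> a != x -> exists y, connect e a y /\ e y x.
Proof.
move/connectP=> [p pth ->]; case/lastP: p pth => [|q y] pth; first by rewrite eqxx.
rewrite last_rcons rcons_path in pth * => _; case/andP: pth => pq ey.
by exists (last a q); split=> //; apply/connectP; exists q.
Qed.

Definition convex (A : {set T}) := forall x y z, x \in A -> y \in A ->
  connect e x z -> connect e z y -> z \in A.

Lemma add_one (I J : {set T}) a x0 : convex I -> convex J -> I \subset J ->
  a \in I -> x0 \in J -> x0 \notin I -> connect e a x0 ->
  exists x, [/\ x \in J, x \notin I, convex (x |: I) & exists2 y, y \in I & e y x].
Proof.
move=> cI cJ sIJ aI x0J x0I ax0.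
pose S := [pred x | (x \in J) && (x \notin I) && [exists b in I, connect e b x]].
have Sx0 : S x0 by rewrite /S /= x0J x0I; apply/existsP; exists a; rewrite aI.
case: (arg_minnP r Sx0) => x /andP[/andP[xJ xI] /existsP[b /andP[bI bx]]] xmin.
have key : forall z, connect e b z -> connect e z x -> z \in I \/ z = x.
  move=> z bz zx; have zJ : z \in J := cJ _ _ _ (subsetP sIJ _ bI) xJ bz zx.
  case zI : (z \in I); first by left.
  case: (conn_rank zx) => [->|lt]; first by right.
  have : S z by rewrite /S /= zJ zI; apply/existsP; exists b; rewrite bI.
  by move/xmin; rewrite leqNgt lt.
exists x; split=> //.
- move=> u v z; rewrite !inE => /orP[/eqP->|uI] /orP[/eqP->|vI] uz zv.
  + case: (conn_rank uz) => [->|l1]; first by rewrite eqxx.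
    case: (conn_rank zv) => [->|l2]; first by rewrite eqxx.
    by move: (ltn_trans l1 l2); rewrite ltnn.
  + by case/negP: xI; apply: (cI b v) => //; apply: connect_trans uz zv.
  + have uJ := subsetP sIJ _ uI.
    have zJ : z \in J := cJ _ _ _ uJ xJ uz zv.
    case zI : (z \in I); first by rewrite orbT.
    case: (conn_rank zv) => [->|lt]; first by rewrite eqxx.
    have : S z by rewrite /S /= zJ zI; apply/existsP; exists u; rewrite uI.
    by move/xmin; rewrite leqNgt lt.
  + by rewrite (cI u v z) ?orbT.
- have bx' : b != x by apply: contraNneq xI => <-.
  case: (conn_last bx bx') => y [by_ yx].
  case: (key y by_ (connect1 yx)) => [yI|yx']; first by exists y.
  by move: (hr yx); rewrite yx' ltnn.
Qed.
End Gen.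

Lemma cross (T : finType) (e : rel T) (I : {set T}) a b :
  connect e a b -> a \in I -> b \notin I -> exists u v, [/\ u \in I, v \notin I & e u v].
Proof.
move/connectP=> [p pth ->]; elim: p a pth => [|z p IH] a /=; first by move=> _ ->.
move=> /andP[az pz] aI lI; case zI : (z \in I); first exact: (IH _ pz zI lI).
by exists a, z; rewrite zI.
Qed.

Lemma finish m n (I J : {set vertex m n}) x y :
  is_interval I -> covers I J -> x \in J -> x \notin I ->
  convex (@arrow m n) (x |: I) -> y \in I -> arrow y x || arrow x y ->
  #|J| = #|I| + 1.
Proof.
move=> [I0 Ic Iv] [Ji IJ NK] xJ xI cK yI yx.
have KJ : x |: I = J.
  apply/eqP; apply: contraT => neq; case: NK; exists (x |: I); split.
  - split.
    + by apply/set0Pn; exists x; rewrite setU11.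
    + have sub : subrel (adj_in I) (connect (adj_in (x |: I))).
        move=> u v; rewrite /adj_in => /and3P[uI vI uv]; apply: connect1.
        by rewrite /adj_in !inE uI vI uv !orbT.
      have sym : connect_sym (adj_in (x |: I)).
        apply: sym_connect_sym => u v; rewrite /adj_in.
        by rewrite andbCA orbC.
      have xy : connect (adj_in (x |: I)) x y.
        by apply: connect1; rewrite /adj_in !inE eqxx yI orbT /=; case/orP: yx => ->; rewrite ?orbT.
      move=> u v; rewrite !inE => /orP[/eqP->|uI] /orP[/eqP->|vI].
      * exact: connect0.
      * apply: connect_trans xy _; exact: connect_sub sub _ _ (Ic _ _ yI vI).
      * rewrite sym; apply: connect_trans xy _; exact: connect_sub sub _ _ (Ic _ _ yI uI).
      * exact: connect_sub sub _ _ (Ic _ _ uI vI).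
    + move=> u v z uK vK uz zv; exact: cK uK vK uz zv.
  - by rewrite properEneq subsetUr andbT; apply: contraNneq xI => ->; rewrite setU11.
  - rewrite properEneq neq /=; apply/subsetP=> u; rewrite !inE => /orP[/eqP->//|uI].
    by move: IJ; rewrite properE => /andP[/subsetP ->].
by rewrite -KJ cardsU1 xI addnC.
Qed.

Theorem mainTheorem2 (m n : nat) (hm : 0 < m) (hn : 0 < n)
    (I J : {set vertex m n}) :
  is_interval I -> covers I J -> #|J| = #|I| + 1.
Proof.
move=> HI HJ; have HI' := HI; have HJ' := HJ.
case: HI' => I0 Ic Iv; case: HJ' => [[J0 Jc Jv] IJ NK].
case/set0Pn: I0 => a aI.
case/properP: IJ => sIJ [b bJ bI].
case: (cross (Jc _ _ (subsetP sIJ _ aI) bJ) aI bI) => u [v [uI vI]].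
rewrite /adj_in => /and3P[uJ vJ /orP[uv|vu]].
- have hr : forall x y, @arrow m n x y -> x.1 + x.2 < y.1 + y.2.
    move=> x y; rewrite /arrow => /orP[] /andP[/eqP-> /eqP->]; rewrite ?addnS ?addSn //.
  case: (add_one hr (a := u) (x0 := v) Iv Jv sIJ uI vJ vI (connect1 uv))
    => x [xJ xI cK [y yI yx]].
  by apply: (finish HI HJ xJ xI cK yI); rewrite yx.
- pose e := [rel x y | @arrow m n y x].
  pose r := fun x : vertex m n => m + n - (x.1 + x.2).
  have hr : forall x y, e x y -> r x < r y.
    move=> [x1 x2] [y1 y2]; rewrite /e /r /arrow /= => /orP[] /andP[/eqP e1 /eqP e2];
    have := ltn_ord x1; have := ltn_ord x2; lia.
  have cv : forall A : {set vertex m n}, convex (@arrow m n) A <-> convex e A.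
    move=> A; split=> cA x y z xA yA; rewrite !connect_rev /= => xz zy;
      [exact: (cA y x z) | exact: (cA y x z)].
  have uv' : connect e u v by rewrite connect_rev /=; apply: connect1.
  have [cI cJ] : convex e I /\ convex e J by split; apply/cv.
  case: (add_one hr cI cJ sIJ uI vJ vI uv') => x [xJ xI /cv cK [y yI yx]].
  apply: (finish HI HJ xJ xI cK yI); by apply/orP; right.
Qed.
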